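(* Let $\Omega_{Q_3}$ be the infinite cubic lattice graph, i.e. the graph with vertex set $\mathbb{Z}^3$ in which two vertices are adjacent iff they differ by $1$ in exactly one coordinate and agree in the others. Then $12 \leq \chi_{td}(\Omega_{Q_3}) \leq 13$.
   Context: For a (possibly infinite) simple graph $G$ and a positive integer $k$, a proper $k$-total difference labeling of $G$ is a function $f: V(G)\to\{1,\dots,k\}$, extended to edges by $f(\{u,v\}) = |f(u)-f(v)|$, such that: (i) adjacent vertices receive different labels; (ii) two distinct edges sharing a vertex receive different labels; (iii) no edge receives the same label as either of its endpoints. $\chi_{td}(G)$ denotes the smallest $k$ for which $G$ has a proper $k$-total difference labeling. *)

(* Defs.v *)
From Stdlib Require Import ZArith.
Open Scope Z_scope.

Definition edge_label {V : Type} (f : V -> Z) (u v : V) : Z := Z.abs (f u - f v).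

Definition proper_total_difference_labeling {V : Type} (adj : V -> V -> Prop)
    (k : Z) (f : V -> Z) : Prop :=
  (forall v, 1 <= f v <= k) /\
  (forall u v, adj u v -> f u <> f v) /\
  (forall u v w, adj u v -> adj u w -> v <> w -> edge_label f u v <> edge_label f u w) /\
  (forall u v, adj u v -> edge_label f u v <> f u /\ edge_label f u v <> f v).

Definition has_ptd_labeling {V : Type} (adj : V -> V -> Prop) (k : Z) : Prop :=
  exists f : V -> Z, proper_total_difference_labeling adj k f.

Definition is_chi_td {V : Type} (adj : V -> V -> Prop) (n : Z) : Prop :=
  1 <= n /\ has_ptd_labeling adj n /\
  (forall k, 1 <= k < n -> ~ has_ptd_labeling adj k).

Definition Z3 : Type := (Z * Z * Z)%type.

Definition cubic_adj (p q : Z3) : Prop :=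
  let '(x1, y1, z1) := p in
  let '(x2, y2, z2) := q in
  (Z.abs (x1 - x2) = 1 /\ y1 = y2 /\ z1 = z2) \/
  (x1 = x2 /\ Z.abs (y1 - y2) = 1 /\ z1 = z2) \/
  (x1 = x2 /\ y1 = y2 /\ Z.abs (z1 - z2) = 1).

(* Main.v *)
Require Import Defs.
From Stdlib Require Import ZArith Lia List Classical.
Import ListNotations.
Open Scope Z_scope.

Definition adm (c v : Z) : bool :=
  negb (v =? c) && negb (Z.abs (c - v) =? c) && negb (Z.abs (c - v) =? v).
Definition dset (c : Z) (L : list Z) : list Z :=
  nodup Z.eq_dec (map (fun v => Z.abs (c - v)) (filter (adm c) L)).
Definition step (L : list Z) : list Z :=
  filter (fun c => (6 <=? length (dset c L))%nat) L.

Fixpoint iter_step (n : nat) (L : list Z) : list Z :=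
  match n with O => L | S n => iter_step n (step L) end.

Definition L0 : list Z := [1;2;3;4;5;6;7;8;9;10;11].

Lemma iter_empty : exists n, iter_step n L0 = [].
Proof. exists 20%nat. vm_compute. reflexivity. Qed.

Lemma nodup6 (a b c d e g : Z) :
  a <> b -> a <> c -> a <> d -> a <> e -> a <> g ->
  b <> c -> b <> d -> b <> e -> b <> g ->
  c <> d -> c <> e -> c <> g -> d <> e -> d <> g -> e <> g ->
  NoDup [a;b;c;d;e;g].
Proof.
  intros. repeat constructor; simpl; intuition congruence.
Qed.

Section Lower.
Variable f : Z3 -> Z.
Hypothesis Hf : proper_total_difference_labeling cubic_adj 11 f.

Lemma step_ok (L : list Z) : (forall u, In (f u) L) -> forall u, In (f u) (step L).
Proof.
  intros HL u. destruct Hf as [Hr [H1 [H2 H3]]].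
  unfold step. apply filter_In. split; [apply HL|].
  apply Nat.leb_le.
  destruct u as [[x y] z].
  set (c := f (x, y, z)).
  set (n1 := (x+1, y, z)). set (n2 := (x-1, y, z)).
  set (n3 := (x, y+1, z)). set (n4 := (x, y-1, z)).
  set (n5 := (x, y, z+1)). set (n6 := (x, y, z-1)).
  assert (A1 : cubic_adj (x,y,z) n1) by (simpl; lia).
  assert (A2 : cubic_adj (x,y,z) n2) by (simpl; lia).
  assert (A3 : cubic_adj (x,y,z) n3) by (simpl; lia).
  assert (A4 : cubic_adj (x,y,z) n4) by (simpl; lia).
  assert (A5 : cubic_adj (x,y,z) n5) by (simpl; lia).
  assert (A6 : cubic_adj (x,y,z) n6) by (simpl; lia).
  assert (Hin : forall n, cubic_adj (x,y,z) n -> In (Z.abs (c - f n)) (dset c L)).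
  { intros n An. unfold dset. apply nodup_In. apply (in_map (fun v => Z.abs (c - v))). apply filter_In.
    split; [apply HL|]. unfold adm.
    pose proof (H1 _ _ An). pose proof (H3 _ _ An). unfold edge_label in *.
    fold c in H, H0.
    destruct (f n =? c) eqn:E1; [apply Z.eqb_eq in E1; congruence|].
    destruct (Z.abs (c - f n) =? c) eqn:E2; [apply Z.eqb_eq in E2; tauto|].
    destruct (Z.abs (c - f n) =? f n) eqn:E3; [apply Z.eqb_eq in E3; tauto|].
    reflexivity. }
  assert (D : forall n m, cubic_adj (x,y,z) n -> cubic_adj (x,y,z) m -> n <> m ->
             Z.abs (c - f n) <> Z.abs (c - f m)).
  { intros n m An Am Hnm. exact (H2 _ _ _ An Am Hnm). }
  assert (Hne : forall a b c' a' b' c'' : Z, (a <> a' \/ b <> b' \/ c' <> c'') -> (a,b,c') <> (a',b',c'')).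
  { intros. intro E. inversion E. lia. }
  change 6%nat with (length [Z.abs (c - f n1); Z.abs (c - f n2); Z.abs (c - f n3);
                             Z.abs (c - f n4); Z.abs (c - f n5); Z.abs (c - f n6)]).
  apply NoDup_incl_length.
  - apply nodup6; apply D; auto; unfold n1, n2, n3, n4, n5, n6; apply Hne; lia.
  - intros d Hd. simpl in Hd.
    destruct Hd as [<-|[<-|[<-|[<-|[<-|[<-|[]]]]]]]; apply Hin; assumption.
Qed.

Lemma iter_ok : forall n L, (forall u, In (f u) L) -> forall u, In (f u) (iter_step n L).
Proof.
  induction n; intros L HL u; simpl; auto. apply IHn. apply step_ok. exact HL.
Qed.

Lemma lower_false : False.
Proof.
  destruct iter_empty as [n Hn].
  assert (H0 : forall u, In (f u) L0).
  { intro u. destruct Hf as [Hr _]. specialize (Hr u).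
    assert (f u = 1 \/ f u = 2 \/ f u = 3 \/ f u = 4 \/ f u = 5 \/ f u = 6 \/
            f u = 7 \/ f u = 8 \/ f u = 9 \/ f u = 10 \/ f u = 11) by lia.
    unfold L0; simpl; intuition. }
  pose proof (iter_ok n L0 H0 (0,0,0)). rewrite Hn in H. exact H.
Qed.
End Lower.

Lemma no_small (k : Z) : k <= 11 -> ~ has_ptd_labeling cubic_adj k.
Proof.
  intros Hk [f [Hr Hrest]]. apply (lower_false f). split; [|exact Hrest].
  intro v. specialize (Hr v). lia.
Qed.

Definition G (a : Z) : Z :=
  if a =? 0 then 13 else if a =? 1 then 4 else if a =? 2 then 10 else
  if a =? 3 then 1 else if a =? 4 then 9 else if a =? 5 then 12 else 3.

Definition res (p : Z3) : Z := let '(x, y, z) := p in (x + 2*y + 3*z) mod 7.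

Definition lab (p : Z3) : Z := G (res p).

Lemma res_range p : 0 <= res p < 7.
Proof. destruct p as [[x y] z]. simpl. apply Z.mod_pos_bound. lia. Qed.

Lemma range7 a : 0 <= a < 7 ->
  a = 0 \/ a = 1 \/ a = 2 \/ a = 3 \/ a = 4 \/ a = 5 \/ a = 6.
Proof. lia. Qed.

Lemma K1 a : 1 <= G a <= 13.
Proof. unfold G. repeat (destruct (_ =? _)); lia. Qed.

Lemma K2 a b : 0 <= a < 7 -> 0 <= b < 7 -> a <> b ->
  G a <> G b /\ Z.abs (G a - G b) <> G a /\ Z.abs (G a - G b) <> G b.
Proof.
  intros Ha Hb.
  destruct (range7 a Ha) as [->|[->|[->|[->|[->|[->| ->]]]]]];
  destruct (range7 b Hb) as [->|[->|[->|[->|[->|[->| ->]]]]]];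
  intros; try congruence; vm_compute; repeat split; discriminate.
Qed.

Lemma K3 a b c : 0 <= a < 7 -> 0 <= b < 7 -> 0 <= c < 7 ->
  a <> b -> a <> c -> b <> c -> Z.abs (G a - G b) <> Z.abs (G a - G c).
Proof.
  intros Ha Hb Hc.
  destruct (range7 a Ha) as [->|[->|[->|[->|[->|[->| ->]]]]]];
  destruct (range7 b Hb) as [->|[->|[->|[->|[->|[->| ->]]]]]];
  destruct (range7 c Hc) as [->|[->|[->|[->|[->|[->| ->]]]]]];
  intros; try congruence; vm_compute; discriminate.
Qed.

Lemma modeq a b : a mod 7 = b mod 7 -> -6 <= a - b <= 6 -> a = b.
Proof.
  intros E H. pose proof (Z.div_mod a 7 ltac:(lia)). pose proof (Z.div_mod b 7 ltac:(lia)).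
  pose proof (Z.mod_pos_bound a 7 ltac:(lia)). pose proof (Z.mod_pos_bound b 7 ltac:(lia)).
  set (qa := a / 7) in *. set (qb := b/7) in *. rewrite E in *. clearbody qa qb. lia.
Qed.

Lemma res_adj u v : cubic_adj u v -> res u <> res v.
Proof.
  destruct u as [[x1 y1] z1], v as [[x2 y2] z2]. unfold res, cubic_adj in *. intros H E.
  apply modeq in E; lia.
Qed.

Lemma res_adj2 u v w : cubic_adj u v -> cubic_adj u w -> v <> w -> res v <> res w.
Proof.
  destruct u as [[x1 y1] z1], v as [[x2 y2] z2], w as [[x3 y3] z3]. unfold res, cubic_adj in *.
  intros H H' Hne E. apply Hne. apply modeq in E; [|lia].
  assert (x2 = x3 /\ y2 = y3 /\ z2 = z3) as [-> [-> ->]] by lia. reflexivity.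
Qed.

Lemma upper : has_ptd_labeling cubic_adj 13.
Proof.
  exists lab. unfold proper_total_difference_labeling, edge_label, lab.
  split; [|split; [|split]].
  - intro v. apply K1.
  - intros u v H. apply (K2 _ _ (res_range u) (res_range v) (res_adj u v H)).
  - intros u v w H H' Hn. apply K3; try apply res_range.
    + exact (res_adj u v H).
    + exact (res_adj u w H').
    + exact (res_adj2 u v w H H' Hn).
  - intros u v H. pose proof (K2 _ _ (res_range u) (res_range v) (res_adj u v H)). tauto.
Qed.

Theorem mainTheorem5 :
  exists n : Z, is_chi_td cubic_adj n /\ 12 <= n <= 13.
Proof.
  destruct (classic (has_ptd_labeling cubic_adj 12)) as [H12|H12].
  - exists 12. split; [|lia]. split; [lia|]. split; [exact H12|].
    intros k Hk. apply no_small. lia.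
  - exists 13. split; [|lia]. split; [lia|]. split; [exact upper|].
    intros k Hk. destruct (Z.eq_dec k 12) as [->|Hne]; [exact H12|].
    apply no_small. lia.
Qed.
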